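(* For $n\ge2$, within the set of CPS tensors in $\mathbb{C}^{n\times n\times n\times n}$: $\mathbb{C}\vec S^{n^2\times n^2}_+$ is a proper subset of $CPS^{n^4}_+$ and a proper subset of $HPSD^{4,n}_+$; furthermore $CPS^{n^4}_+\not\subset HPSD^{4,n}_+$ and $HPSD^{4,n}_+\not\subset CPS^{n^4}_+$.
   Context: A tensor $\mathcal{A}\in\mathbb{C}^{n\times n\times n\times n}$ is conjugate partial-symmetric (CPS) if $\mathcal{A}_{ijkl}=\overline{\mathcal{A}_{klij}}$ and $\mathcal{A}_{ijkl}=\mathcal{A}_{jikl}=\mathcal{A}_{ijlk}$ for all indices. Write $\langle X,\mathcal{A}X\rangle=\sum_{i,j,k,l}\mathcal{A}_{ijkl}X_{kl}\overline{X_{ij}}$. For a CPS $\mathcal{A}$: $\mathcal{A}\in CPS^{n^4}_+$ (PSD) iff $\sum_{ijkl}\mathcal{A}_{ijkl}x_ix_j\bar x_k\bar x_l\ge0$ for all $x\in\mathbb{C}^n$; $\mathcal{A}\in\mathbb{C}\vec S^{n^2\times n^2}_+$ (matrix PSD) iff $\langle X,\mathcal{A}X\rangle\ge0$ for all complex symmetric $X\in\mathbb{C}^{n\times n}$ ($X=X^T$); $\mathcal{A}\in HPSD^{4,n}_+$ (general PSD) iff $\langle X,\mathcal{A}X\rangle\ge0$ for all Hermitian positive semidefinite $X\in\mathbb{C}^{n\times n}$. *)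

(* Defs.v *)
From HB Require Import structures.
From mathcomp Require Import all_boot all_order all_algebra.
From mathcomp Require Import reals.
From mathcomp.real_closed Require Import complex.
Set Implicit Arguments. Unset Strict Implicit. Unset Printing Implicit Defensive.
Import Order.TTheory GRing.Theory Num.Theory.
Local Open Scope ring_scope.

(* The complex numbers are modelled as R[i] = complex R for R : realType
   (the real numbers); R[i] is a numClosedFieldType, where the order is
   "z <= w iff w - z is a nonnegative real" and conj is Num.conj. *)

Definition tensor4 (C : Type) (n : nat) := 'I_n -> 'I_n -> 'I_n -> 'I_n -> C.

Section Defs.
Variable R : realType.
Local Notation C := (R[i]).
Variable n : nat.

Definition CPS (A : tensor4 C n) : Prop :=
  forall i j k l,
    A i j k l = Num.conj (A k l i j) /\ A i j k l = A j i k l /\ A i j k l = A i j l k.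

Definition tinner (A : tensor4 C n) (X : 'M[C]_n) : C :=
  \sum_(i < n) \sum_(j < n) \sum_(k < n) \sum_(l < n)
     A i j k l * X k l * Num.conj (X i j).

Definition CPS_psd (A : tensor4 C n) : Prop :=
  CPS A /\ forall x : 'I_n -> C,
    0 <= \sum_(i < n) \sum_(j < n) \sum_(k < n) \sum_(l < n)
           A i j k l * x i * x j * Num.conj (x k) * Num.conj (x l).

Definition CPS_matrix_psd (A : tensor4 C n) : Prop :=
  CPS A /\ forall X : 'M[C]_n, X^T = X -> 0 <= tinner A X.

Definition hermitian_psd (X : 'M[C]_n) : Prop :=
  (forall i j, X j i = Num.conj (X i j)) /\
  forall v : 'I_n -> C,
    0 <= \sum_(i < n) \sum_(j < n) Num.conj (v i) * X i j * v j.

Definition CPS_general_psd (A : tensor4 C n) : Prop :=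
  CPS A /\ forall X : 'M[C]_n, hermitian_psd X -> 0 <= tinner A X.

End Defs.

(* Main.v *)
Require Import Defs.
From HB Require Import structures.
From mathcomp Require Import all_boot all_order all_algebra.
From mathcomp Require Import reals.
From mathcomp.real_closed Require Import complex.
From mathcomp Require Import ring.
Set Implicit Arguments. Unset Strict Implicit. Unset Printing Implicit Defensive.
Import Order.TTheory GRing.Theory Num.Theory.
Local Open Scope ring_scope.

Definition S4 (R : realType) (n : nat) (F : 'I_n -> 'I_n -> 'I_n -> 'I_n -> R[i]) :=
  \sum_(i < n) \sum_(j < n) \sum_(k < n) \sum_(l < n) F i j k l.

Lemma S4D (R : realType) n (F G : 'I_n -> 'I_n -> 'I_n -> 'I_n -> R[i]) :
  S4 (fun i j k l => F i j k l + G i j k l) = S4 F + S4 G.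
Proof.
rewrite /S4 -big_split; apply: eq_bigr => i _; rewrite -big_split.
apply: eq_bigr => j _; rewrite -big_split; apply: eq_bigr => k _.
by rewrite -big_split.
Qed.

Lemma S4_ext (R : realType) n (F G : 'I_n -> 'I_n -> 'I_n -> 'I_n -> R[i]) :
  (forall i j k l, F i j k l = G i j k l) -> S4 F = S4 G.
Proof.
move=> H; rewrite /S4; apply: eq_bigr => i _; apply: eq_bigr => j _.
apply: eq_bigr => k _; apply: eq_bigr => l _; exact: H.
Qed.

Lemma S4_swkl (R : realType) n (F : 'I_n -> 'I_n -> 'I_n -> 'I_n -> R[i]) :
  S4 (fun i j k l => F i j l k) = S4 F.
Proof. rewrite /S4; apply: eq_bigr => i _; apply: eq_bigr => j _; exact: exchange_big. Qed.

Lemma S4_swij (R : realType) n (F : 'I_n -> 'I_n -> 'I_n -> 'I_n -> R[i]) :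
  S4 (fun i j k l => F j i k l) = S4 F.
Proof. rewrite /S4; exact: exchange_big. Qed.

Lemma ge0_eq (C : numDomainType) (E W : C) : W = E -> 0 <= W -> 0 <= E.
Proof. by move=> ->. Qed.

Lemma incl1 (R : realType) n (A : tensor4 R[i] n) : CPS_matrix_psd A -> CPS_psd A.
Proof.
case=> hC hM; split=> // x.
set X := \matrix_(k, l) ((x k)^* * (x l)^*).
have HX : X^T = X by apply/matrixP => k l; rewrite !mxE mulrC.
apply: (@ge0_eq _ _ (tinner A X)); last exact: hM.
rewrite /tinner; apply: eq_bigr => i _; apply: eq_bigr => j _.
apply: eq_bigr => k _; apply: eq_bigr => l _.
rewrite !mxE rmorphM /= !conjCK; ring.
Qed.

Lemma incl2 (R : realType) n (A : tensor4 R[i] n) : CPS_matrix_psd A -> CPS_general_psd A.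
Proof.
case=> hC hM; split=> // X _.
have HY : (X + X^T)^T = X + X^T by apply/matrixP => i j; rewrite !mxE addrC.
have := hM _ HY.
have tS : forall Y, tinner A Y = S4 (fun i j k l => A i j k l * Y k l * (Y i j)^*) by [].
set T1 := fun i j k l => A i j k l * X k l * (X i j)^*.
have -> : tinner A (X + X^T) = 4 * tinner A X.
  rewrite !tS (@S4_ext _ _ _ (fun i j k l =>
     (T1 i j k l + T1 i j l k) + (T1 j i k l + T1 j i l k))); last first.
    move=> i j k l; rewrite /T1 !mxE rmorphD /=.
    have [_ [h1 h2]] := hC i j k l.
    have [_ [h3 h4]] := hC j i k l.
    rewrite -h4 -h1 -h2; ring.
  rewrite !S4D (S4_swkl T1) (S4_swij T1).
  rewrite (S4_swij (fun i j k l => T1 i j l k)) (S4_swkl T1); ring.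
by rewrite pmulr_rge0 // ltr0n.
Qed.

Lemma sum2s (R : realType) n (i0 i1 : 'I_n) (h0 : nat_of_ord i0 = 0%N)
  (h1 : nat_of_ord i1 = 1%N) (F : 'I_n -> R[i]) :
  (forall i : 'I_n, (2 <= i)%N -> F i = 0) ->
  \sum_(i < n) F i = \sum_(i <- [:: i0; i1]) F i.
Proof.
move=> HF; rewrite big_cons big_seq1 (bigD1 i0) //= (bigD1 i1) /=; last first.
  by rewrite -(inj_eq val_inj) /= h0 h1.
rewrite big1 ?addr0 // => i /andP[Hi0 Hi1]; apply: HF.
case: i Hi0 Hi1 => [[|[|m]] Hm] //= Hi0 Hi1.
  by move: Hi0; rewrite -(inj_eq val_inj) /= h0.
by move: Hi1; rewrite -(inj_eq val_inj) /= h1.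
Qed.

Lemma sum4s (R : realType) n (i0 i1 : 'I_n) (h0 : nat_of_ord i0 = 0%N)
  (h1 : nat_of_ord i1 = 1%N) (H : 'I_n -> 'I_n -> 'I_n -> 'I_n -> R[i]) :
  (forall i j k l : 'I_n, [|| (2 <= i)%N, (2 <= j)%N, (2 <= k)%N | (2 <= l)%N] ->
      H i j k l = 0) ->
  \sum_(i < n) \sum_(j < n) \sum_(k < n) \sum_(l < n) H i j k l =
  \sum_(i <- [:: i0; i1]) \sum_(j <- [:: i0; i1]) \sum_(k <- [:: i0; i1])
     \sum_(l <- [:: i0; i1]) H i j k l.
Proof.
move=> HH.
rewrite (sum2s h0 h1); last first.
  move=> i hi; apply: big1 => j _; apply: big1 => k _; apply: big1 => l _.
  by apply: HH; rewrite hi.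
apply: eq_bigr => i _; rewrite (sum2s h0 h1); last first.
  move=> j hj; apply: big1 => k _; apply: big1 => l _.
  by apply: HH; rewrite hj orbT.
apply: eq_bigr => j _; rewrite (sum2s h0 h1); last first.
  move=> k hk; apply: big1 => l _.
  by apply: HH; rewrite hk !orbT.
apply: eq_bigr => k _; rewrite (sum2s h0 h1) // => l hl.
by apply: HH; rewrite hl !orbT.
Qed.

Definition Adn (R : realType) (i j k l : nat) : R[i] :=
  match i, j, k, l with
  | O, O, (S O), (S O) => 1
  | (S O), (S O), O, O => 1
  | _, _, _, _ => 0
  end.

Definition Acn (R : realType) (i j k l : nat) : R[i] :=
  match i, j, k, l with
  | O, O, (S O), (S O) => -1
  | (S O), (S O), O, O => -1
  | O, (S O), O, (S O) => 1
  | O, (S O), (S O), O => 1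
  | (S O), O, O, (S O) => 1
  | (S O), O, (S O), O => 1
  | _, _, _, _ => 0
  end.

Definition Ad (R : realType) n : tensor4 R[i] n :=
  fun i j k l => Adn R i j k l.
Definition Ac (R : realType) n : tensor4 R[i] n :=
  fun i j k l => Acn R i j k l.

Lemma Adn_van (R : realType) (i j k l : nat) :
  [|| (2 <= i)%N, (2 <= j)%N, (2 <= k)%N | (2 <= l)%N] -> Adn R i j k l = 0.
Proof.
by case: i => [|[|i]]; case: j => [|[|j]]; case: k => [|[|k]]; case: l => [|[|l]].
Qed.

Lemma Acn_van (R : realType) (i j k l : nat) :
  [|| (2 <= i)%N, (2 <= j)%N, (2 <= k)%N | (2 <= l)%N] -> Acn R i j k l = 0.
Proof.
by case: i => [|[|i]]; case: j => [|[|j]]; case: k => [|[|k]]; case: l => [|[|l]].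
Qed.

Lemma Adn_cps (R : realType) (i j k l : nat) :
  Adn R i j k l = (Adn R k l i j)^* /\ Adn R i j k l = Adn R j i k l /\
  Adn R i j k l = Adn R i j l k.
Proof.
case: i => [|[|i]]; case: j => [|[|j]]; case: k => [|[|k]]; case: l => [|[|l]];
  by rewrite /= ?(rmorph0, rmorph1, rmorphN1).
Qed.

Lemma Acn_cps (R : realType) (i j k l : nat) :
  Acn R i j k l = (Acn R k l i j)^* /\ Acn R i j k l = Acn R j i k l /\
  Acn R i j k l = Acn R i j l k.
Proof.
case: i => [|[|i]]; case: j => [|[|j]]; case: k => [|[|k]]; case: l => [|[|l]];
  by rewrite /= ?(rmorph0, rmorph1, rmorphN1).
Qed.

Lemma Ac_psd (R : realType) n (i0 i1 : 'I_n) (h0 : nat_of_ord i0 = 0%N)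
  (h1 : nat_of_ord i1 = 1%N) : CPS_psd (@Ac R n).
Proof.
split; first by move=> i j k l; exact: Acn_cps.
move=> x; rewrite (sum4s h0 h1); last first.
  by move=> i j k l H; rewrite /Ac (Acn_van R H) !mul0r.
rewrite !big_cons !big_nil /Ac h0 h1 /=.
set a := x i0; set b := x i1.
apply: (@ge0_eq _ _ ((a * b^* - a^* * b) * (a * b^* - a^* * b)^* + 2 * ((a * b^*) * (a * b^*)^*))).
  rewrite !(rmorphB, rmorphM) /= !conjCK; ring.
by apply: addr_ge0; [exact: mul_conjC_ge0 | apply: mulr_ge0; [exact: ler0n | exact: mul_conjC_ge0]].
Qed.

Definition Xd (R : realType) n : 'M[R[i]]_n :=
  \matrix_(k, l) (if (nat_of_ord k == nat_of_ord l) && (nat_of_ord k < 2)%N then 1 else 0).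

Lemma Xd_van (R : realType) n (i j : 'I_n) :
  (2 <= i)%N || (2 <= j)%N -> @Xd R n i j = 0.
Proof.
rewrite mxE; case: eqP => [E|] //=; rewrite E orbb => hj.
by rewrite ltnNge hj.
Qed.

Lemma Xd_hpsd (R : realType) n (i0 i1 : 'I_n) (h0 : nat_of_ord i0 = 0%N)
  (h1 : nat_of_ord i1 = 1%N) : hermitian_psd (@Xd R n).
Proof.
split.
  move=> i j; rewrite !mxE.
  case: eqP => [E|/eqP E]; first by rewrite E eqxx /=; case: ifP; rewrite ?rmorph1 ?rmorph0.
  by rewrite eq_sym (negbTE E) /= rmorph0.
move=> v; rewrite (sum2s h0 h1); last first.
  by move=> i hi; apply: big1 => j _; rewrite Xd_van ?hi // mulr0 mul0r.
rewrite !big_cons !big_nil.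
rewrite (sum2s h0 h1 (F := fun j => (v i0)^* * Xd R n i0 j * v j)); last first.
  by move=> j hj; rewrite Xd_van ?hj ?orbT // mulr0 mul0r.
rewrite (sum2s h0 h1 (F := fun j => (v i1)^* * Xd R n i1 j * v j)); last first.
  by move=> j hj; rewrite Xd_van ?hj ?orbT // mulr0 mul0r.
rewrite !big_cons !big_nil !mxE h0 h1 /=.
rewrite !(mulr1, mulr0, mul0r, addr0, add0r).
by apply: addr_ge0; rewrite mulrC mul_conjC_ge0.
Qed.

Lemma Ac_not_gen (R : realType) n (i0 i1 : 'I_n) (h0 : nat_of_ord i0 = 0%N)
  (h1 : nat_of_ord i1 = 1%N) : ~ CPS_general_psd (@Ac R n).
Proof.
case=> _ /(_ _ (@Xd_hpsd R n i0 i1 h0 h1)).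
rewrite /tinner (sum4s h0 h1); last first.
  by move=> i j k l H; rewrite /Ac (Acn_van R H) !mul0r.
rewrite !big_cons !big_nil /Ac !mxE h0 h1 /=.
rewrite !(rmorph1, rmorph0, mulr1, mulr0, mul0r, mul1r, addr0, add0r).
by rewrite -opprD oppr_ge0 lt_geF // addr_gt0 ?ltr01.
Qed.

Lemma sum_delta (R : realType) n (F : 'I_n -> R[i]) (i : 'I_n) :
  \sum_(j < n) (if j == i then 1 else 0) * F j = F i.
Proof.
rewrite (bigD1 i) //= eqxx mul1r big1 ?addr0 // => j /negbTE ->.
by rewrite mul0r.
Qed.

Lemma hpsd_diag (R : realType) n (X : 'M[R[i]]_n) (i : 'I_n) :
  hermitian_psd X -> 0 <= X i i.
Proof.
case=> _ /(_ (fun j => if j == i then 1 else 0)).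
rewrite (eq_bigr (fun k => (if k == i then 1 else 0) * X k i)); last first.
  move=> k _.
  rewrite (eq_bigr (fun j => (if j == i then 1 else 0) * ((if k == i then 1 else 0) * X k j))).
    by rewrite sum_delta.
  move=> j _.
  by case: (k == i); case: (j == i);
    rewrite /= ?rmorph1 ?rmorph0 ?mulr1 ?mulr0 ?mul1r ?mul0r.
by rewrite sum_delta.
Qed.

Lemma Ad_gen (R : realType) n (i0 i1 : 'I_n) (h0 : nat_of_ord i0 = 0%N)
  (h1 : nat_of_ord i1 = 1%N) : CPS_general_psd (@Ad R n).
Proof.
split; first by move=> i j k l; exact: Adn_cps.
move=> X HX.
have d0 := hpsd_diag i0 HX; have d1 := hpsd_diag i1 HX.
rewrite /tinner (sum4s h0 h1); last first.
  by move=> i j k l H; rewrite /Ad (Adn_van R H) !mul0r.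
rewrite !big_cons !big_nil /Ad h0 h1 /=.
rewrite !(rmorph1, rmorph0, mulr1, mulr0, mul0r, mul1r, addr0, add0r).
rewrite !geC0_conj //.
by apply: addr_ge0; apply: mulr_ge0.
Qed.

Lemma Ad_not_psd (R : realType) n (i0 i1 : 'I_n) (h0 : nat_of_ord i0 = 0%N)
  (h1 : nat_of_ord i1 = 1%N) : ~ CPS_psd (@Ad R n).
Proof.
case=> _ /(_ (fun i => if nat_of_ord i == 0%N then 1 else
                      if nat_of_ord i == 1%N then 'i else 0)).
rewrite (sum4s h0 h1); last first.
  by move=> i j k l H; rewrite /Ad (Adn_van R H) !mul0r.
rewrite !big_cons !big_nil /Ad h0 h1 /=.
rewrite !(rmorph1, rmorph0, mulr1, mulr0, mul0r, mul1r, addr0, add0r).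
rewrite conjCi mulrNN -expr2 sqrCi.
by rewrite -opprD oppr_ge0 lt_geF // addr_gt0 ?ltr01.
Qed.

Theorem mainTheorem20 (R : realType) (n : nat) (hn : (2 <= n)%N) :
  (* C vec S_+ is a proper subset of CPS_+ *)
  ((forall A : tensor4 R[i] n, CPS_matrix_psd A -> CPS_psd A) /\
   (exists A : tensor4 R[i] n, CPS_psd A /\ ~ CPS_matrix_psd A)) /\
  (* C vec S_+ is a proper subset of HPSD_+ *)
  ((forall A : tensor4 R[i] n, CPS_matrix_psd A -> CPS_general_psd A) /\
   (exists A : tensor4 R[i] n, CPS_general_psd A /\ ~ CPS_matrix_psd A)) /\
  (* CPS_+ is not contained in HPSD_+ *)
  (exists A : tensor4 R[i] n, CPS_psd A /\ ~ CPS_general_psd A) /\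
  (* HPSD_+ is not contained in CPS_+ *)
  (exists A : tensor4 R[i] n, CPS_general_psd A /\ ~ CPS_psd A).
Proof.
pose i0 : 'I_n := Ordinal (ltnW hn).
pose i1 : 'I_n := Ordinal hn.
have h0 : nat_of_ord i0 = 0%N by [].
have h1 : nat_of_ord i1 = 1%N by [].
split; [split; [exact: (@incl1 R n) | ] | split; [split; [exact: (@incl2 R n) | ] | split]].
- exists (@Ac R n); split; first exact: Ac_psd h0 h1.
  by move=> /incl2; apply: Ac_not_gen h0 h1.
- exists (@Ad R n); split; first exact: Ad_gen h0 h1.
  by move=> /incl1; apply: Ad_not_psd h0 h1.
- exists (@Ac R n); split; first exact: Ac_psd h0 h1.
  exact: Ac_not_gen h0 h1.
- exists (@Ad R n); split; first exact: Ad_gen h0 h1.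
  exact: Ad_not_psd h0 h1.
Qed.
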